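(* Let $\mathcal U,\mathcal V,\mathcal X$ be real finite-dimensional Euclidean spaces, $\mathcal F:\mathcal X\to\mathcal U$ and $\mathcal G:\mathcal X\to\mathcal V$ linear maps, $\sigma>0$, $\Sigma_f$ a self-adjoint positive semidefinite linear operator on $\mathcal U$, and $\Sigma_g$ a self-adjoint positive semidefinite linear operator on $\mathcal V$. Let $\mathcal E_g$ be a self-adjoint positive definite linear operator on $\mathcal V$ with $\mathcal E_g\succeq \sigma^{-1}\Sigma_g+\mathcal G\mathcal G^*$, and set $\mathcal T_g:=\mathcal E_g-\sigma^{-1}\Sigma_g-\mathcal G\mathcal G^*\succeq 0$. Let $\mathcal T_f$ be a self-adjoint positive semidefinite linear operator on $\mathcal U$ and set $\widehat{\mathcal T}_f:=\mathcal T_f+\mathcal F\mathcal G^*\mathcal E_g^{-1}\mathcal G\mathcal F^*$. Let $\mathcal H:\mathcal X\to\mathcal U\times\mathcal V$, $\mathcal Hx=(\mathcal Fx,\mathcal Gx)$. Then $$\mathcal W:=\mathcal H\mathcal H^*+\sigma^{-1}\begin{pmatrix}\Sigma_f&0\\0&\Sigma_g\end{pmatrix}+\begin{pmatrix}\widehat{\mathcal T}_f&0\\0&\mathcal T_g\end{pmatrix}\succ 0 \iff \mathcal F\mathcal F^*+\sigma^{-1}\Sigma_f+\mathcal T_f\succ 0 .$$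
   Context: $\succ 0$ ($\succeq 0$) means positive definite (semidefinite) for self-adjoint operators; $\mathcal A\succeq\mathcal B$ means $\mathcal A-\mathcal B\succeq 0$. In the paper, $\Sigma_f$ is the operator with $\langle \xi-\tilde\xi,u-\tilde u\rangle\ge\|u-\tilde u\|^2_{\Sigma_f}$ for all $u,\tilde u\in\mathrm{dom} f$, $\xi\in\partial f(u)$, $\tilde\xi\in\partial f(\tilde u)$ for a closed proper convex $f$, and $\Sigma_g$ is the Hessian of a convex quadratic $g(v)=\frac12\langle v,\Sigma_g v\rangle-\langle b,v\rangle$. *)

(* Defs.v *)
From HB Require Import structures.
From mathcomp Require Import all_boot all_order all_algebra.
Set Implicit Arguments. Unset Strict Implicit. Unset Printing Implicit Defensive.
Import Order.TTheory GRing.Theory Num.Theory.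
Local Open Scope ring_scope.

(* Finite-dimensional real Euclidean spaces are modelled as column vectors
   'cV[R]_k with the standard inner product <u,v> = u^T v; linear maps are
   matrices, adjoints are transposes. *)

Definition psd (R : realFieldType) (k : nat) (A : 'M[R]_k) : Prop :=
  A^T = A /\ forall u : 'cV[R]_k, 0 <= (u^T *m A *m u) 0 0.

Definition pd (R : realFieldType) (k : nat) (A : 'M[R]_k) : Prop :=
  A^T = A /\ forall u : 'cV[R]_k, u != 0 -> 0 < (u^T *m A *m u) 0 0.

Definition loewner_ge (R : realFieldType) (k : nat) (A B : 'M[R]_k) : Prop :=
  psd (A - B).

(* Main.v *)
Require Import Defs.
From HB Require Import structures.
From mathcomp Require Import all_boot all_order all_algebra.
Import Order.TTheory GRing.Theory Num.Theory.
Local Open Scope ring_scope.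
From mathcomp Require Import ring lra.
Lemma e00D (R : realFieldType) (A B : 'M[R]_1) : (A + B) 0 0 = A 0 0 + B 0 0.
Proof. by rewrite mxE. Qed.
Lemma e000 (R : realFieldType) : (0 : 'M[R]_1) 0 0 = 0.
Proof. by rewrite mxE. Qed.
Lemma e00N (R : realFieldType) (A : 'M[R]_1) : (- A) 0 0 = - A 0 0.
Proof. by rewrite mxE. Qed.
Lemma e00Z (R : realFieldType) a (A : 'M[R]_1) : (a *: A) 0 0 = a * A 0 0.
Proof. by rewrite mxE. Qed.
Lemma e00T (R : realFieldType) (A : 'M[R]_1) : (A^T) 0 0 = A 0 0.
Proof. by rewrite mxE. Qed.

Lemma key (R : realFieldType) (m n p : nat)
  (F : 'M[R]_(m, p)) (G : 'M[R]_(n, p)) (s : R)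
  (Sf : 'M[R]_m) (Sg : 'M[R]_n) (Eg Ei : 'M[R]_n) (Tf : 'M[R]_m)
  (u : 'cV[R]_m) (v : 'cV[R]_n) :
  Eg^T = Eg -> Ei^T = Ei -> Eg *m Ei = 1%:M ->
  ((col_mx u v)^T *m (col_mx F G *m (col_mx F G)^T + s *: block_mx Sf 0 0 Sg
     + block_mx (Tf + F *m G^T *m Ei *m G *m F^T) 0 0 (Eg - s *: Sg - G *m G^T))
    *m col_mx u v) 0 0
  = (u^T *m (F *m F^T + s *: Sf + Tf) *m u) 0 0 +
    ((v + Ei *m (G *m F^T *m u))^T *m Eg *m (v + Ei *m (G *m F^T *m u))) 0 0.
Proof.
move=> EgT EiT EgEi.
set b := G *m F^T *m u.
have bT : b^T = u^T *m F *m G^T by rewrite /b !trmx_mul trmxK mulmxA.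
set a := Ei *m b.
have Ega : Eg *m a = b by rewrite /a mulmxA EgEi mul1mx.
have aT : a^T = b^T *m Ei by rewrite /a trmx_mul EiT.
rewrite -[(v + a)^T *m Eg *m _]mulmxA [Eg *m (v + a)]mulmxDr Ega [(v + a)^T]raddfD /= [(v^T + a^T) *m _]mulmxDl [v^T *m _]mulmxDr [a^T *m _]mulmxDr.
have -> : a^T *m (Eg *m v) = b^T *m v by rewrite mulmxA -{1}EgT -trmx_mul Ega.
rewrite aT.
rewrite tr_col_mx !mulmxDr !mulmxDl.
rewrite !mulmxA mul_row_col tr_col_mx -[(_ + _) *m row_mx _ _ *m col_mx u v]mulmxA mul_row_col.
rewrite -!scalemxAr -!scalemxAl !mul_row_block !mul_row_col.
rewrite ?mulmx0 ?mul0mx ?addr0 ?add0r.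
rewrite bT.
rewrite !mulmxDl !mulmxDr ?mulmxN ?mulNmx ?mulmxDl -?scalemxAl -?scalemxAr !mulmxA ?mulNmx -?scalemxAl ?mulmxA.
rewrite !(e00D, e00N, e00Z).
have -> : (v^T *m G *m F^T *m u) 0 0 = (u^T *m F *m G^T *m v) 0 0.
  by rewrite -e00T !trmx_mul !trmxK !mulmxA.
ring.
Qed.

Lemma pd_unit (R : realFieldType) (n : nat) (E : 'M[R]_n) : pd E -> E \in unitmx.
Proof.
move=> [ET Eq]; rewrite unitmxE unitfE; apply/negP => /det0P [x x0 xE].
have := Eq x^T; rewrite trmx_eq0 x0 trmxK xE mul0mx mxE ltxx.
by move=> /(_ isT).
Qed.

Lemma pd_ge0 (R : realFieldType) (n : nat) (E : 'M[R]_n) (z : 'cV[R]_n) :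
  pd E -> 0 <= (z^T *m E *m z) 0 0.
Proof.
move=> [_ Eq]; have [->|nz] := eqVneq z 0.
  by rewrite mulmx0 mxE.
exact/ltW/Eq.
Qed.

Theorem proposition2p1 (R : realFieldType) (m n p : nat)
  (F : 'M[R]_(m, p)) (G : 'M[R]_(n, p)) (sigma : R)
  (Sf : 'M[R]_m) (Sg : 'M[R]_n) (Eg : 'M[R]_n) (Tf : 'M[R]_m) :
  0 < sigma ->
  psd Sf -> psd Sg ->
  pd Eg -> loewner_ge Eg (sigma^-1 *: Sg + G *m G^T) ->
  psd Tf ->
  let Tg := Eg - sigma^-1 *: Sg - G *m G^T in
  let hTf := Tf + F *m G^T *m invmx Eg *m G *m F^T in
  let H : 'M[R]_(m + n, p) := col_mx F G in
  let W : 'M[R]_(m + n) :=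
    H *m H^T + sigma^-1 *: block_mx Sf 0 0 Sg + block_mx hTf 0 0 Tg in
  pd W <-> pd (F *m F^T + sigma^-1 *: Sf + Tf).
Proof.
move=> hs [SfT _] [SgT _] hEg _ [TfT _] Tg hTf H W.
have EgU := @pd_unit _ _ _ hEg.
have EgT : Eg^T = Eg by case: hEg.
have EiT : (invmx Eg)^T = invmx Eg by rewrite trmx_inv EgT.
have EgEi : Eg *m invmx Eg = 1%:M by rewrite mulmxV.
have K u v := @key _ _ _ _ F G sigma^-1 Sf Sg Eg (invmx Eg) Tf u v EgT EiT EgEi.
have MT : (F *m F^T + sigma^-1 *: Sf + Tf)^T = F *m F^T + sigma^-1 *: Sf + Tf.
  by rewrite !linearD /= linearZ /= trmx_mul trmxK SfT TfT.
split.
- move=> [_ Wq]; split => // u u0.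
  pose v := - (invmx Eg *m (G *m F^T *m u)).
  have w0 : col_mx u v != 0 by rewrite col_mx_eq0 negb_and u0.
  have := Wq _ w0; rewrite /W /H /hTf /Tg K /v addNr trmx0 mul0mx mulmx0 e000.
  move=> h; lra.
- move=> [_ Mq]; split.
    rewrite /W /H /hTf /Tg !linearD /= linearZ /= !trmx_mul trmxK !tr_block_mx !trmx0.
    rewrite !linearD /= !linearN /= linearZ /= !trmx_mul !trmxK SfT SgT TfT EgT EiT !mulmxA.
    done.
  move=> w w0; rewrite -(vsubmxK w) /W /H /hTf /Tg K.
  set u := usubmx w; set v := dsubmx w.
  have [u0|u0] := eqVneq u 0.
    rewrite u0 !trmx0 !mulmx0 ?mul0mx addr0 e000 add0r; case: hEg => _; apply.
    by move: w0; rewrite -(vsubmxK w) col_mx_eq0 -/u -/v u0 eqxx.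
  by apply: ltr_wpDr; [exact: (@pd_ge0 _ _ _ _ hEg) | exact: Mq].
Qed.
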